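(* Let $(A,\succ,\prec)$ be a Leibniz-dendriform algebra with associated Leibniz algebra $(A,\circ)$ and let $r\in A\otimes A$ be skew-symmetric ($\tau(r)=-r$). The following are equivalent: (a) $S(r)=0$; (b) for all $\zeta,\eta\in A^*$: $T_r(\zeta)\circ T_r(\eta)=T_r\big(L_\succ^*(T_r(\zeta))\eta-L_\odot^*(T_r(\eta))\zeta\big)$ (i.e. $T_r$ is an $\mathcal O$-operator on $(A,\circ)$ associated to $(A^*,L_\succ^*,-L_\odot^* )$); (c) for all $\zeta,\eta\in A^*$: $T_r(\zeta)\succ T_r(\eta)=T_r\big(L_\circ^*(T_r(\zeta))\eta+R_\odot^*(T_r(\eta))\zeta\big)$ and $T_r(\zeta)\prec T_r(\eta)=T_r\big(-L_\prec^*(T_r(\zeta))\eta-L_\star^*(T_r(\eta))\zeta\big)$ (i.e. $T_r$ is an $\mathcal O$-operator on $(A,\succ,\prec)$ associated to $(A^*,L_\circ^*,R_\odot^*,-L_\prec^*,-L_\star^* )$).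
   Context: All vector spaces are finite-dimensional over a field $k$; $\langle\cdot,\cdot\rangle$ is the natural pairing, $\tau(a\otimes b)=b\otimes a$. A Leibniz-dendriform algebra is a vector space $A$ with bilinear operations $\succ,\prec$ such that, with $x\circ y:=x\succ y+x\prec y$, for all $x,y,z\in A$: $(x\circ y)\succ z=x\succ(y\succ z)-y\succ(x\succ z)$, $y\prec(x\circ z)+(x\succ y)\prec z=x\succ(y\prec z)$, $x\prec(y\circ z)=(x\prec y)\prec z+y\succ(x\prec z)$. Write $x\odot y:=x\succ y+y\prec x$, $x\star y:=x\circ y+y\circ x$. For a binary operation $*$ let $L_*(x)y=x*y$, $R_*(x)y=y*x$, and $L_\odot:=L_\succ+R_\prec$, $R_\odot:=R_\succ+L_\prec$, $L_\star:=L_\circ+R_\circ$. For $f:A\to\mathrm{End}(A)$, $f^*:A\to\mathrm{End}(A^* )$ is $\langle f^*(x)\xi,v\rangle=-\langle\xi,f(x)v\rangle$. For $r=\sum_i a_i\otimes b_i$, $T_r:A^*\to A$ is $\langle T_r(\zeta),\eta\rangle=\langle r,\zeta\otimes\eta\rangle$, and $S(r):=\sum_{i,j}\big(a_i\otimes a_j\otimes (b_j\circ b_i)-a_i\otimes (b_i\odot a_j)\otimes b_j-(a_i\succ a_j)\otimes b_i\otimes b_j\big)$ (the Leibniz-dendriform Yang–Baxter equation is $S(r)=0$). *)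

(* Defs.v *)
From HB Require Import structures.
From mathcomp Require Import all_boot all_order all_algebra.
Set Implicit Arguments. Unset Strict Implicit. Unset Printing Implicit Defensive.
Import GRing.Theory.
Local Open Scope ring_scope.

(* The dual A^dual is 'Hom(A, K^o) (linear functionals); the pairing <xi, v> is xi v.
   A tensor r \in A (x) A is given by a presentation r = \sum_i a_i (x) b_i,
   i.e. a sequence of pairs (a_i, b_i). *)

Section LD.
Variables (K : fieldType) (A : vectType K).

Definition tensor2 := seq (A * A).

Definition pair2 (r : tensor2) (zeta eta : A -> K) : K :=
  \sum_(p <- r) zeta p.1 * eta p.2.

(* tau(r) = - r, tested against all of A^dual (x) A^dual *)
Definition skew_sym (r : tensor2) : Prop :=
  forall zeta eta : 'Hom(A, K^o),
    pair2 r (fun v => zeta v) (fun v => eta v)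
    = - pair2 r (fun v => eta v) (fun v => zeta v).

(* T_r : A^dual -> A,  <T_r(zeta), eta> = <r, zeta (x) eta>, i.e. T_r zeta = \sum_i zeta(a_i) b_i *)
Definition Tr (r : tensor2) (zeta : A -> K) : A := \sum_(p <- r) zeta p.1 *: p.2.

Definition dualop (f : A -> A -> A) (x : A) (xi : A -> K) : A -> K :=
  fun v => - xi (f x v).

Variables (succ prec : A -> A -> A).
Definition circ x y := succ x y + prec x y.
Definition odot x y := succ x y + prec y x.
Definition star x y := circ x y + circ y x.
Definition L_succ x v := succ x v.
Definition L_prec x v := prec x v.
Definition L_circ x v := circ x v.
Definition L_odot x v := succ x v + prec v x.
Definition R_odot x v := succ v x + prec x v.
Definition L_star x v := circ x v + circ v x.

Definition bilinear_op (m : A -> A -> A) : Prop :=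
  (forall x, linear (m x)) /\ (forall y, linear (fun x => m x y)).

Definition LD_axioms : Prop :=
  forall x y z : A,
  [/\ succ (circ x y) z = succ x (succ y z) - succ y (succ x z),
      prec y (circ x z) + prec (succ x y) z = succ x (prec y z)
    & prec x (circ y z) = prec (prec x y) z + succ y (prec x z)].

(* S(r) = 0 in A (x) A (x) A, tested against all zeta (x) eta (x) theta in
   A^dual (x) A^dual (x) A^dual (faithful since A is finite-dimensional). *)
Definition S_pair (r : tensor2) (zeta eta theta : A -> K) : K :=
  \sum_(p <- r) \sum_(q <- r)
    ( zeta p.1 * eta q.1 * theta (circ q.2 p.2)
    - zeta p.1 * eta (odot p.2 q.1) * theta q.2
    - zeta (succ p.1 q.1) * eta p.2 * theta q.2 ).

Definition LD_YBE (r : tensor2) : Prop :=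
  forall zeta eta theta : 'Hom(A, K^o),
    S_pair r (fun v => zeta v) (fun v => eta v) (fun v => theta v) = 0.

Definition O_op_Leibniz (r : tensor2) : Prop :=
  forall zeta eta : 'Hom(A, K^o),
    let z := (fun v => zeta v) in let e := (fun v => eta v) in
    circ (Tr r z) (Tr r e)
    = Tr r (fun v => dualop L_succ (Tr r z) e v - dualop L_odot (Tr r e) z v).

Definition O_op_LD (r : tensor2) : Prop :=
  forall zeta eta : 'Hom(A, K^o),
    let z := (fun v => zeta v) in let e := (fun v => eta v) in
    succ (Tr r z) (Tr r e)
      = Tr r (fun v => dualop L_circ (Tr r z) e v + dualop R_odot (Tr r e) z v)
    /\
    prec (Tr r z) (Tr r e)
      = Tr r (fun v => - dualop L_prec (Tr r z) e v - dualop L_star (Tr r e) z v).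

End LD.

(* Main.v *)
Require Import Defs.
From HB Require Import structures.
From mathcomp Require Import all_boot all_order all_algebra.
From mathcomp Require Import ring.
Set Implicit Arguments. Unset Strict Implicit.
Import GRing.Theory.
Local Open Scope ring_scope.

Section S.
Variables (K : fieldType) (A : vectType K).

Lemma mkHom (f : A -> K^o) (lf : linear f) : {h : 'Hom(A, K^o) | forall v, h v = f v}.
Proof.
pose fL : {linear A -> K^o} := HB.pack f (GRing.isLinear.Build K A K^o *:%R f lf).
by exists (linfun fL) => v; rewrite lfunE.
Qed.

Lemma sep (w : A) : (forall h : 'Hom(A, K^o), h w = 0) -> w = 0.
Proof.
move=> H.
rewrite (coord_vbasis (memvf w)).
apply: big1 => i _.
have lf : linear (coord (vbasis (fullv : {vspace A})) i : A -> K^o).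
  by move=> a u v; rewrite linearP.
have [h hE] := mkHom lf.
by have := H h; rewrite hE => ->; rewrite scale0r.
Qed.

Lemma lin0 (U V : lmodType K) (g : U -> V) : linear g -> g 0 = 0.
Proof. move=> lg; have := lg 1 0 0; rewrite !scale1r addr0 => h.
by apply: (addrI (g 0)); rewrite addr0 -h. Qed.

Lemma lin_sumZ (U V : lmodType K) (g : U -> V) (lg : linear g) (I : Type) (s : seq I)
  (c : I -> K) (v : I -> U) :
  g (\sum_(i <- s) c i *: v i) = \sum_(i <- s) c i *: g (v i).
Proof.
elim: s => [|x s IH]; first by rewrite !big_nil lin0.
by rewrite !big_cons lg IH.
Qed.

Lemma linD (U V : lmodType K) (f g : U -> V) : linear f -> linear g -> linear (fun v => f v + g v).
Proof. by move=> lf lg a u v; rewrite lf lg scalerDr addrACA. Qed.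
Lemma linN (U V : lmodType K) (f : U -> V) : linear f -> linear (fun v => - f v).
Proof. by move=> lf a u v; rewrite lf opprD scalerN. Qed.
Lemma linH (h : 'Hom(A, K^o)) (g : A -> A) : linear g -> linear (fun v => h (g v) : K^o).
Proof. by move=> lg a u v; rewrite lg linearP. Qed.

Variables (succ prec : A -> A -> A).
Hypotheses (hsucc : bilinear_op succ) (hprec : bilinear_op prec).
Variable (r : tensor2 A).
Hypothesis (hskew : skew_sym r).

Notation T h := (Tr r (fun v => h v)).

Lemma Tr_ext (f g : A -> K) : (forall v, f v = g v) -> Tr r f = Tr r g.
Proof. by move=> H; apply: eq_bigr => p _; rewrite H. Qed.

Lemma Tr_B (f g : A -> K) : Tr r (fun v => f v - g v) = Tr r f - Tr r g.
Proof. by rewrite /Tr -sumrB; apply: eq_bigr => p _; rewrite scalerBl. Qed.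

Lemma Tr_D (f g : A -> K) : Tr r (fun v => f v + g v) = Tr r f + Tr r g.
Proof. by rewrite /Tr -big_split; apply: eq_bigr => p _; rewrite scalerDl. Qed.

Lemma hom_sumZ (h : 'Hom(A, K^o)) (I : Type) (s : seq I) (c : I -> K) (v : I -> A) :
  h (\sum_(i <- s) c i *: v i) = \sum_(i <- s) c i * h (v i).
Proof. by rewrite (@lin_sumZ _ _ h) //; move=> a x y; rewrite linearP. Qed.

Lemma hom_Tr (h : 'Hom(A, K^o)) (f : A -> K) : h (Tr r f) = \sum_(p <- r) f p.1 * h p.2.
Proof. exact: hom_sumZ. Qed.

Lemma key (h : 'Hom(A, K^o)) (f : A -> K^o) (lf : linear f) :
  h (Tr r f) = - f (T h).
Proof.
have [g gE] := mkHom lf.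
rewrite hom_Tr /Tr (@lin_sumZ _ _ f lf).
have := hskew g h; rewrite /pair2.
under eq_bigr do rewrite gE.
under [in X in _ = - X -> _]eq_bigr do rewrite gE.
by move=> ->.
Qed.

Lemma lsl x : linear (succ x). Proof. exact: hsucc.1. Qed.
Lemma lsr y : linear (fun x => succ x y). Proof. exact: hsucc.2. Qed.
Lemma lpl x : linear (prec x). Proof. exact: hprec.1. Qed.
Lemma lpr y : linear (fun x => prec x y). Proof. exact: hprec.2. Qed.
Lemma lcl x : linear (circ succ prec x). Proof. exact: linD (lsl x) (lpl x). Qed.
Lemma lcr y : linear (fun x => circ succ prec x y). Proof. exact: linD (lsr y) (lpr y). Qed.
Lemma lol x : linear (odot succ prec x). Proof. exact: linD (lsl x) (lpr x). Qed.
Lemma lor y : linear (fun x => odot succ prec x y). Proof. exact: linD (lsr y) (lpl y). Qed.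


Definition BR (z e : 'Hom(A, K^o)) :=
  Tr r (fun v => z (odot succ prec (T e) v)) - Tr r (fun v => e (succ (T z) v)).

Lemma Sform (z e th : 'Hom(A, K^o)) :
  S_pair succ prec r (fun v => e v) (fun v => z v) (fun v => th v)
  = th (circ succ prec (T z) (T e) - BR z e).
Proof.
rewrite /BR !raddfB /=.
have E1 : th (circ succ prec (T z) (T e)) =
  \sum_(p <- r) \sum_(q <- r) e p.1 * z q.1 * th (circ succ prec q.2 p.2).
  rewrite /Tr (@lin_sumZ _ _ _ (lcr _)) hom_sumZ.
  under eq_bigr do rewrite (@lin_sumZ _ _ _ (lcl _)) hom_sumZ mulr_sumr.
  rewrite exchange_big /=; apply: eq_bigr => p _; apply: eq_bigr => q _.
  by rewrite mulrCA mulrA.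
have E2 : th (Tr r (fun v => z (odot succ prec (T e) v))) =
  \sum_(p <- r) \sum_(q <- r) e p.1 * z (odot succ prec p.2 q.1) * th q.2.
  rewrite hom_Tr.
  under eq_bigr do rewrite /Tr (@lin_sumZ _ _ _ (lor _)) hom_sumZ mulr_suml.
  rewrite exchange_big /=; apply: eq_bigr => p _; apply: eq_bigr => q _.
  by [].
have E3 : th (Tr r (fun v => e (succ (T z) v))) =
  - \sum_(p <- r) \sum_(q <- r) e (succ p.1 q.1) * z p.2 * th q.2.
  rewrite hom_Tr exchange_big -sumrN /=; apply: eq_bigr => q _.
  rewrite -mulr_suml -mulNr; congr (_ * _).
  have := @key z (fun v => e (succ v q.1)) (linH e (lsr q.1)).
  by rewrite hom_Tr => ->; rewrite opprK.
rewrite E1 E2 E3 opprK addrA /S_pair -!sumrB; apply: eq_bigr => p _.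
by rewrite -!sumrB.
Qed.


Definition Bf := forall z e : 'Hom(A, K^o), circ succ prec (T z) (T e) = BR z e.

Lemma b_iff : O_op_Leibniz succ prec r <-> Bf.
Proof.
have bE : forall z e : 'Hom(A, K^o),
  Tr r (fun v => dualop (L_succ succ) (T z) (fun v => e v) v
     - dualop (L_odot succ prec) (T e) (fun v => z v) v) = BR z e.
  by move=> z e; rewrite /BR -Tr_B; apply: Tr_ext => v;
     rewrite /dualop /L_succ /L_odot /odot opprK addrC.
by rewrite /O_op_Leibniz; split => H z e; have := H z e; cbv zeta;
  rewrite bE.
Qed.

Lemma a_iff : LD_YBE succ prec r <-> Bf.
Proof.
split => H.
  move=> z e; apply/eqP; rewrite -subr_eq0; apply/eqP; apply: sep => th.
  by rewrite -Sform; apply: H.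
by move=> e z th; rewrite Sform H subrr raddf0.
Qed.

Lemma b_c1 : Bf -> forall z e : 'Hom(A, K^o),
  succ (T z) (T e) = Tr r (fun v => dualop (L_circ succ prec) (T z) (fun v => e v) v
     + dualop (R_odot succ prec) (T e) (fun v => z v) v).
Proof.
move=> H z e; apply/eqP; rewrite -subr_eq0; apply/eqP; apply: sep => th.
have lf : linear (fun v => dualop (L_circ succ prec) (T z) (fun v => e v) v
     + dualop (R_odot succ prec) (T e) (fun v => z v) v : K^o).
  apply: linD; rewrite /dualop; apply: linN; apply: linH.
    exact: lcl.
  exact: linD (lsr _) (lpl _).
rewrite raddfB /= (key th lf) /dualop /L_circ /R_odot opprK.
have := congr1 e (H z th).
rewrite /BR raddfB /= (key e (linH z (lol (T th)))) (key e (linH th (lsl (T z)))).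
rewrite opprK => ->; rewrite /odot; ring.
Qed.


Lemma c_iff : O_op_LD succ prec r <-> Bf.
Proof.
rewrite /O_op_LD; split => H.
  move=> z e; have := H z e; cbv zeta; case=> H1 H2.
  rewrite /circ H1 H2 /BR -Tr_D -Tr_B; apply: Tr_ext => v.
  rewrite /dualop /L_prec /L_star /L_circ /R_odot /circ /odot !raddfD /=; ring.
move=> z e; cbv zeta; split; first exact: b_c1.
have -> : prec (T z) (T e) = circ succ prec (T z) (T e) - succ (T z) (T e).
  by rewrite /circ addrAC subrr add0r.
rewrite H (b_c1 H) /BR -!Tr_B; apply: Tr_ext => v.
rewrite /dualop /L_prec /L_star /L_circ /R_odot /circ /odot !raddfD /=; ring.
Qed.

End S.

Theorem mainTheorem3 (K : fieldType) (A : vectType K)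
  (succ prec : A -> A -> A)
  (hsucc : bilinear_op succ) (hprec : bilinear_op prec)
  (hLD : LD_axioms succ prec)
  (r : tensor2 A) (hskew : skew_sym r) :
  (LD_YBE succ prec r <-> O_op_Leibniz succ prec r) /\
  (O_op_Leibniz succ prec r <-> O_op_LD succ prec r).
Proof.
rewrite (b_iff succ prec r) (a_iff hsucc hprec hskew) (c_iff hsucc hprec hskew).
by split.
Qed.
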